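(* Let $f$ be a function of unitation on $\{0,1\}^n$ and let $\sigma=1$, $\kappa\in\mathbb{N}$ and $\mu\geq (n+1)\cdot\kappa$. Then the expected optimisation time of the $(\mu+1)$ EA with phenotypic clearing with clearing radius $\sigma$, niche capacity $\kappa$ and population size $\mu$ on $f$ is $O(\mu n\log n)$.
   Context: A function of unitation is $f:\{0,1\}^n\to\mathbb{R}$ with $f(x)=u(|x|_1)$ for some $u:\{0,\dots,n\}\to\mathbb{R}^+$, where $|x|_1$ is the number of 1-bits of $x$; fitness values are assumed positive. The optimisation time is the number of generations until a global maximum of $f$ is found. The $(\mu+1)$ EA with clearing (population size $\mu$, clearing radius $\sigma$, niche capacity $\kappa$, distance function $\mathrm{d}$): $P_0$ consists of $\mu$ bit strings chosen independently and uniformly at random. In generation $t$: choose a parent $x\in P_t$ uniformly at random; create $y$ by flipping each bit of $x$ independently with probability $1/n$; let $P_t^*=P_t\cup\{y\}$; update the fitness values of $P_t^*$ by the clearing procedure: sort $P_t^*$ by decreasing fitness; for $i=1,\dots,|P_t^*|$, if the current fitness of $P[i]$ is positive, set $w:=1$ and for $j=i+1,\dots,|P_t^*|$: if the current fitness of $P[j]$ is positive and $\mathrm{d}(P[i],P[j])<\sigma$ then, if $w<\kappa$ set $w:=w+1$, else set the fitness of $P[j]$ to $0$. Individuals whose fitness is not reset are winners, the others are cleared. Then choose $z\in P_t$ with worst (cleared) fitness uniformly at random; if the (cleared) fitness of $y$ is at least that of $z$, set $P_{t+1}=P_t^*\setminus\{z\}$, otherwise $P_{t+1}=P_t^*\setminus\{y\}$.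 Phenotypic clearing uses $\mathrm{d}(x,y)=\big||x|_1-|y|_1\big|$. *)

(* Defs.v *)
From HB Require Import structures.
From mathcomp Require Import all_boot all_order all_algebra.
From mathcomp Require Import Rstruct.
From Stdlib Require Reals.
From Stdlib Require Import Rdefinitions.

Set Implicit Arguments.
Unset Strict Implicit.
Unset Printing Implicit Defensive.

Import Order.TTheory GRing.Theory Num.Theory.
Local Open Scope ring_scope.

Definition bits (n : nat) := n.-tuple bool.

Definition ones {n} (x : bits n) : nat := count id x.

Definition hamming {n} (x y : bits n) : nat :=
  count id [seq p.1 != p.2 | p <- zip x y].

(* Standard bit mutation with rate 1/n: probability that x is mutated into y. *)
Definition mutprob {n} (x y : bits n) : R :=
  (n%:R^-1) ^+ hamming x y * (1 - n%:R^-1) ^+ (n - hamming x y).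

Definition unit_fun {n} (u : nat -> R) (x : bits n) : R := u (ones x).

Definition pheno_dist {n} (x y : bits n) : R := `|(ones x)%:R - (ones y)%:R|.

(* The clearing procedure, for an indexed (multi)set Q : 'I_m -> T, fitness
   fit, distance d, radius sigma, capacity kappa, and an ordering [ord] of the
   indices (the result of sorting by decreasing fitness). *)
Section Clearing.
Variables (T : Type) (m : nat) (fit : T -> R) (d : T -> T -> R)
          (sigma : R) (kappa : nat) (Q : 'I_m -> T).

Definition clear_inner (i : 'I_m) (js : seq 'I_m) (cf : {ffun 'I_m -> R})
  : {ffun 'I_m -> R} :=
  (foldl (fun (st : nat * {ffun 'I_m -> R}) (j : 'I_m) =>
     let: (w, c) := st in
     if (0 < c j) && (d (Q i) (Q j) < sigma) then
       if leq w.+1 kappa then (w.+1, c)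
       else (w, [ffun k => if k == j then 0 else c k])
     else st) (1%N, cf) js).2.

Fixpoint clear_outer (ord : seq 'I_m) (cf : {ffun 'I_m -> R})
  : {ffun 'I_m -> R} :=
  match ord with
  | [::] => cf
  | i :: rest =>
      clear_outer rest (if 0 < cf i then clear_inner i rest cf else cf)
  end.

Definition clearing (ord : seq 'I_m) : {ffun 'I_m -> R} :=
  clear_outer ord [ffun k => fit (Q k)].

End Clearing.

Section EA.
Variables (n mu kappa : nat) (u : nat -> R).
Let f := @unit_fun n u.

(* populations: mu bit strings (an indexed multiset) *)
Definition pop := {ffun 'I_mu -> bits n}.
Definition xpop := {ffun 'I_mu.+1 -> bits n}.

(* P_t^* = P_t u {y}; the offspring y sits at index ord_max *)
Definition extend (P : pop) (y : bits n) : xpop :=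
  [ffun k : 'I_mu.+1 => if unlift ord_max k is Some j then P j else y].

Definition lft (j : 'I_mu) : 'I_mu.+1 := widen_ord (leqnSn mu) j.

(* A tie-breaking rule for "sort P_t^* by decreasing fitness": any ordering of
   the indices that is sorted by decreasing fitness. *)
Definition valid_sort (tb : xpop -> seq 'I_mu.+1) : Prop :=
  forall Q : xpop,
    perm_eq (tb Q) (enum 'I_mu.+1) /\
    sorted (fun i j => f (Q j) <= f (Q i)) (tb Q).

Variable tb : xpop -> seq 'I_mu.+1.

Definition cleared (P : pop) (y : bits n) : {ffun 'I_mu.+1 -> R} :=
  clearing f pheno_dist 1 kappa (extend P y) (tb (extend P y)).

Definition worst (P : pop) (y : bits n) : {set 'I_mu} :=
  [set j : 'I_mu | [forall k : 'I_mu,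
       cleared P y (lft j) <= cleared P y (lft k)]].

Definition next (P : pop) (y : bits n) (z : 'I_mu) : pop :=
  if cleared P y (lft z) <= cleared P y ord_max
  then [ffun k => if k == z then y else P k]
  else P.

Definition kernel (P P' : pop) : R :=
  \sum_(i : 'I_mu) mu%:R^-1 *
   \sum_(y : bits n) mutprob (P i) y *
    \sum_(z in worst P y) (#|worst P y|%:R)^-1 * (P' == next P y z)%:R.

Definition init (P : pop) : R := \prod_(j < mu) ((2 ^ n)%:R)^-1.

Definition is_opt (x : bits n) : bool := [forall y : bits n, f y <= f x].
Definition has_opt (P : pop) : bool := [exists j, is_opt (P j)].

(* q t P = Pr[ P_t = P and no global optimum in P_0, ..., P_t ] *)
Fixpoint q (t : nat) : {ffun pop -> R} :=
  match t with
  | 0 => [ffun P => if has_opt P then 0 else init P]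
  | t'.+1 => [ffun P' => if has_opt P' then 0
                         else \sum_(P : pop) q t' P * kernel P P']
  end.

(* Pr[T > t], T = optimisation time *)
Definition tail_prob (t : nat) : R := \sum_(P : pop) q t P.

(* sum_{t < N} Pr[T > t]; E[T] = sup_N of this *)
Definition partial_expect (N : nat) : R := \sum_(t < N) tail_prob t.

End EA.

(* Main.v *)
Require Import Defs.
From HB Require Import structures.
From mathcomp Require Import all_boot all_order all_algebra.
From mathcomp Require Import Rstruct.
From Stdlib Require Reals.
From Stdlib Require Import Rdefinitions.
From Stdlib Require Import Rfunctions Rtrigo_def Exp_prop Rpower.
From mathcomp Require Import ring lra zify.
Import Order.TTheory GRing.Theory Num.Theory.
Set Implicit Arguments.
Unset Strict Implicit.
Unset Printing Implicit Defensive.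
Local Open Scope ring_scope.
Local Bind Scope ring_scope with R.


Definition E (x : R) : R := exp x.
Arguments E x%_ring_scope.
Definition L (x : R) : R := ln x.
Arguments L x%_ring_scope.

Lemma expge1 (x : R) : 1 + x <= E x.
Proof. by have /RleP := Rpower.exp_ineq1_le x. Qed.

Lemma exp_pos' (x : R) : 0 < E x.
Proof. by apply/RltP; apply: Exp_prop.exp_pos. Qed.

Lemma ED (x y : R) : E x * E y = E (x + y).
Proof. exact: expRD. Qed.

Lemma E0 : E 0 = 1.
Proof. exact: expR0. Qed.

Lemma EN (x : R) : E (- x) = (E x)^-1.
Proof.
apply: (@mulfI _ (E x)); first by rewrite gt_eqF // exp_pos'.
by rewrite mulfV ?gt_eqF ?exp_pos' // ED subrr E0.
Qed.

Lemma LE (x : R) : L (E x) = x.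
Proof. exact: ln_exp. Qed.

Lemma L_le_exp {x a : R} : 0 < x -> x <= E a -> L x <= a.
Proof.
move=> x0; rewrite le_eqVlt => /orP[/eqP->|/RltP h]; first by rewrite LE.
have x0' : Rlt 0 x by apply/RltP.
have := ln_increasing x (exp a) x0' h; rewrite ln_exp => /RltP/ltW //.
Qed.

Lemma EL (x : R) : 0 < x -> E (L x) = x.
Proof. by move=> /RltP h; apply: exp_ln. Qed.

Lemma L_mono {x y : R} : 0 < x -> x <= y -> L x <= L y.
Proof.
move=> x0 xy; apply: L_le_exp => //; rewrite EL //; exact: lt_le_trans xy.
Qed.

Lemma LM {x y : R} : 0 < x -> 0 < y -> L (x * y) = L x + L y.
Proof. by move=> /RltP hx /RltP hy; apply: ln_mult. Qed.

Lemma L1 : L 1 = 0.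
Proof. exact: ln_1. Qed.

Lemma ln_step (k : nat) : (0 < k)%nat -> (k.+1%:R)^-1 <= L k.+1%:R - L k%:R.
Proof.
move=> k0.
have kp : 0 < k%:R :> R by rewrite ltr0n.
have k1p : 0 < k.+1%:R :> R by rewrite ltr0n.
set x := (k.+1%:R : R)^-1.
have e := expge1 (- x).
have h1 : k%:R <= k.+1%:R * E (-x).
  have -> : (k%:R : R) = k.+1%:R * (1 - x).
    rewrite /x mulrBr mulfV ?gt_eqF // mulr1 -addn1 natrD; lra.
  by rewrite ler_wpM2l // ltW.
have := L_mono kp h1.
rewrite (LM k1p (exp_pos' _)) LE; clearbody x; lra.
Qed.

Lemma harm_ln (n : nat) : (0 < n)%nat -> \sum_(i < n) (i.+1%:R : R)^-1 <= 1 + L n%:R.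
Proof.
elim: n => // n IH _.
case: n IH => [|n] IH.
  by rewrite big_ord1 invr1 L1 addr0.
rewrite big_ord_recr /=.
have := IH isT; have := @ln_step n.+1 isT.
move: (_^-1) (\sum_(i < _) _) (L _) (L _) => a b c d; lra.
Qed.

Lemma ln3 : 1 <= L 3%:R.
Proof.
have h : E 1 <= 3%:R by have /RleP := exp_le_3.
by have := L_mono (exp_pos' 1) h; rewrite LE.
Qed.

Lemma pow_lb (n : nat) : (1 < n)%nat -> 3%:R^-1 <= (1 - (n%:R : R)^-1) ^+ (n.-1).
Proof.
move=> n1.
have np : 0 < n%:R :> R by rewrite ltr0n; case: n n1.
set m := n.-1.
have mp : 0 < m%:R :> R by rewrite ltr0n /m -ltnS prednK // ltnW.
have nm : (n%:R : R) = m%:R + 1 by rewrite /m natr1 prednK // ltnW.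
have mi : 0 < (m%:R : R)^-1 by rewrite invr_gt0.
have h : E (- (m%:R^-1)) <= 1 - n%:R^-1.
  have e := expge1 (m%:R^-1).
  have ep := exp_pos' (m%:R^-1).
  rewrite EN.
  have hh : (1 + m%:R^-1)^-1 = 1 - (n%:R)^-1 :> R.
    rewrite nm; field. by rewrite (gt_eqF mp) (gt_eqF (_ : 0 < m%:R + 1)) //; lra.
  rewrite -hh.
  rewrite lef_pV2 ?posrE //; lra.
have h2 : E (- 1) <= (1 - (n%:R:R)^-1) ^+ m.
  have -> : - 1 = (- (m%:R^-1)) *+ m :> R.
    rewrite mulNrn; congr (- _); by rewrite -(mulr_natr (m%:R^-1)) mulVf ?gt_eqF.
  rewrite /E -expRX -/(E _); apply: lerXn2r => //.
  - by rewrite nnegrE ltW // exp_pos'.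
  - by rewrite nnegrE; apply: le_trans h; apply: ltW; exact: exp_pos'.
apply: le_trans h2.
have e3 : E 1 <= 3%:R by have /RleP := exp_le_3.
have ep := exp_pos' 1.
by rewrite EN lef_pV2 ?posrE // ltr0n.
Qed.


Section ClearLemmas.
Variables (T : Type) (m : nat) (fit : T -> R) (d : T -> T -> R)
          (sigma : R) (kappa : nat) (Q : 'I_m -> T) (lev : 'I_m -> nat).
Hypothesis hd : forall i j, (d (Q i) (Q j) < sigma) = (lev i == lev j).

Definition cstep (i : 'I_m) (st : nat * {ffun 'I_m -> R}) (j : 'I_m) :=
  let: (w, c) := st in
     if (0 < c j) && (d (Q i) (Q j) < sigma) then
       if leq w.+1 kappa then (w.+1, c)
       else (w, [ffun k => if k == j then 0 else c k])
     else st.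

Lemma clear_innerE i js cf :
  clear_inner d sigma kappa Q i js cf = (foldl (cstep i) (1%nat, cf) js).2.
Proof. by []. Qed.

Lemma fold_vals (i : 'I_m) (js : seq 'I_m) (w : nat) (c : {ffun 'I_m -> R}) (k : 'I_m) :
  let r := (foldl (cstep i) (w, c) js).2 in r k = c k \/ r k = 0.
Proof.
elim: js w c => [|j js IH] w c /=; first by left.
rewrite {1}/cstep; case: ifP => _; last exact: IH.
case: ifP => _; first exact: IH.
have [h|h] := IH w [ffun k0 => if k0 == j then 0 else c k0].
  rewrite h ffunE; case: eqP => _; by [right|left].
by right.
Qed.

Lemma fold_changed (i : 'I_m) (js : seq 'I_m) (w : nat) (c : {ffun 'I_m -> R}) (k : 'I_m) :
  (foldl (cstep i) (w, c) js).2 k <> c k -> k \in js /\ lev k = lev i.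
Proof.
elim: js w c => [|j js IH] w c /=; first by [].
rewrite {1}/cstep; case: ifP => hc; last first.
  by move=> /IH [? ?]; rewrite inE; split => //; apply/orP; right.
case: ifP => _.
  by move=> /IH [? ?]; rewrite inE; split => //; apply/orP; right.
set c' := [ffun _ => _].
case: (eqVneq ((foldl (cstep i) (w, c') js).2 k) (c' k)) => [e|/eqP ne] ne2.
  move: ne2; rewrite e /c' ffunE; case: eqP => [->|] // _.
  move/andP: hc => [_]; rewrite hd => /eqP ->; split => //; rewrite inE eqxx //.
by have [? ?] := IH _ _ ne; rewrite inE; split => //; apply/orP; right.
Qed.

Lemma fold_clear (i : 'I_m) (js : seq 'I_m) (w : nat) (c : {ffun 'I_m -> R}) :
  (w <= kappa)%nat ->
  leq kappa.+1 (addn w (count (fun j => (0 < c j) && (lev i == lev j)) js)) ->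
  exists k, lev k = lev i /\ (foldl (cstep i) (w, c) js).2 k = 0.
Proof.
elim: js w c => [|j js IH] w c /=.
  by rewrite addn0 => h1 h2; move: (leq_trans h2 h1); rewrite ltnn.
move=> wk.
rewrite {1}/cstep hd; case: ifP => hc; last first.
  by rewrite add0n; apply: IH.
case: ifP => hw.
  rewrite add1n addnS => h; apply: IH => //; exact: hw.
move=> _; exists j; split; first by move/andP: hc => [_ /eqP].
set c' := [ffun _ => _].
have [->|->] := fold_vals i js w c' j => //.
by rewrite /c' ffunE eqxx.
Qed.

Lemma outer_vals (ord : seq 'I_m) (cf : {ffun 'I_m -> R}) (k : 'I_m) :
  let r := clear_outer d sigma kappa Q ord cf in r k = cf k \/ r k = 0.
Proof.
elim: ord cf => [|i ord IH] cf /=; first by left.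
case: ifP => _; last exact: IH.
rewrite clear_innerE.
have [h|h] := fold_vals i ord 1 cf k.
  by rewrite -h; apply: IH.
have [h2|h2] := IH (foldl (cstep i) (1%nat, cf) ord).2; by right; rewrite h2.
Qed.

Lemma outer_changed (ord : seq 'I_m) (cf : {ffun 'I_m -> R}) (k : 'I_m) :
  uniq ord -> clear_outer d sigma kappa Q ord cf k <> cf k ->
  exists i, i != k /\ lev i = lev k.
Proof.
elim: ord cf => [|i ord IH] cf //= /andP [ni u].
set cf' := (if _ then _ else _).
case: (eqVneq (cf' k) (cf k)) => [e|/eqP ne] ne2.
  by apply: (IH cf') => //; rewrite e.
move: ne; rewrite /cf'; case: ifP => _ // ; rewrite clear_innerE.
move=> /fold_changed [kin lk]; exists i; split => //.
by apply/negP => /eqP ik; move: ni; rewrite ik kin.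
Qed.

Lemma outer_clear (ord : seq 'I_m) (cf : {ffun 'I_m -> R}) (l : nat) :
  (0 < kappa)%nat ->
  leq kappa.+1 (count (fun j => (0 < cf j) && (lev j == l)) ord) ->
  exists k, lev k = l /\ clear_outer d sigma kappa Q ord cf k = 0.
Proof.
move=> k0.
elim: ord cf => [|i ord IH] cf //=.
set cf' := (if _ then _ else _).
case: (boolP ((0 < cf i) && (lev i == l))) => hi.
  move/andP: hi => [ci /eqP li].
  rewrite add1n ltnS => hc.
  have [k [lk ck]] : exists k, lev k = lev i /\ cf' k = 0.
    rewrite /cf' ci clear_innerE; apply: fold_clear => //.
    rewrite add1n ltnS; apply: leq_trans hc _.
    by apply: sub_count => j /andP [-> /eqP ->]; rewrite li eqxx.
  exists k; split; first by rewrite lk.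
  have [->|->] := outer_vals ord cf' k => //.
rewrite add0n => hc; apply: IH.
apply: leq_trans hc _; rewrite leq_eqVlt; apply/orP; left; apply/eqP.
apply: eq_count => j.
case: (eqVneq (lev j) l) => [ljl|]; last by rewrite !andbF.
rewrite !andbT; congr (0 < _).
rewrite /cf'; case: ifP => ci //.
case: (eqVneq ((foldl (cstep i) (1%nat, cf) ord).2 j) (cf j)) => [e|/eqP ne].
  by rewrite clear_innerE e.
have [_ lj] := fold_changed ne.
by move: hi; rewrite ci /= -lj ljl eqxx.
Qed.

End ClearLemmas.


Lemma cnt_enum (T : finType) (p : pred T) : count p (enum T) = #|p|.
Proof. rewrite cardE -size_filter /enum_mem -filter_predI; congr size; apply: eq_filter => x /=. by rewrite andbT. Qed.

Lemma ones_le n (x : bits n) : (ones x <= n)%nat.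
Proof. by rewrite /ones -{2}(size_tuple x) count_size. Qed.

Lemma pheno_lt1 n (x y : bits n) : (pheno_dist x y < 1) = (ones x == ones y).
Proof.
rewrite /pheno_dist.
case: (ltngtP (ones x) (ones y)) => h.
- apply/negbTE; rewrite -leNgt distrC ger0_norm; last by rewrite subr_ge0 ler_nat ltnW.
  by rewrite lerBrDr addrC natr1 ler_nat.
- apply/negbTE; rewrite -leNgt ger0_norm; last by rewrite subr_ge0 ler_nat ltnW.
  by rewrite lerBrDr addrC natr1 ler_nat.
- by rewrite h subrr normr0 ltr01.
Qed.

Lemma lft_lift mu (j : 'I_mu) : lft j = lift ord_max j.
Proof. by apply: val_inj; rewrite /= /bump leqNgt ltn_ord. Qed.

Lemma extend_lft n mu (P : pop n mu) y j : extend P y (lft j) = P j.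
Proof. by rewrite /extend ffunE lft_lift liftK. Qed.

Lemma extend_max n mu (P : pop n mu) y : extend P y ord_max = y.
Proof. by rewrite /extend ffunE unlift_none. Qed.

Lemma ord_split mu (k : 'I_mu.+1) : k = ord_max \/ exists j, k = lft j.
Proof.
case: (unliftP ord_max k) => [j ->|->]; last by left.
by right; exists j; rewrite lft_lift.
Qed.

Section EAfacts.
Variables (n mu kappa : nat) (u : nat -> R) (tb : xpop n mu -> seq 'I_mu.+1).
Hypotheses (upos : forall k, (k <= n)%nat -> 0 < u k) (k1 : (0 < kappa)%nat)
  (hmu : (n.+1 * kappa <= mu)%nat) (htb : valid_sort u tb).

Variables (P : pop n mu) (y : bits n).
Let Q := extend P y.
Let lev (k : 'I_mu.+1) := ones (Q k).
Let cf0 : {ffun 'I_mu.+1 -> R} := [ffun k => unit_fun u (Q k)].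
Let c := cleared kappa u tb P y.

Lemma hdQ i j : (pheno_dist (Q i) (Q j) < 1) = (lev i == lev j).
Proof. exact: pheno_lt1. Qed.

Lemma cE : c = clear_outer pheno_dist 1 kappa Q (tb Q) cf0.
Proof. by []. Qed.

Lemma cf0_pos k : 0 < cf0 k.
Proof. by rewrite ffunE; apply: upos; apply: ones_le. Qed.

Lemma C1 k : c k = unit_fun u (Q k) \/ c k = 0.
Proof. by rewrite cE; have := outer_vals pheno_dist 1 kappa Q (tb Q) cf0 k; rewrite ffunE. Qed.

Lemma C1pos k : 0 <= c k.
Proof. by have [->|->] := C1 k => //; apply: ltW; rewrite /unit_fun; apply: upos; apply: ones_le. Qed.

Lemma C2 k : c k = 0 -> exists i, i != k /\ ones (Q i) = ones (Q k).
Proof.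
move=> ck.
have u0 : uniq (tb Q).
  by have [pe _] := htb Q; rewrite (perm_uniq pe) enum_uniq.
apply: (@outer_changed _ _ pheno_dist 1 kappa Q lev hdQ (tb Q) cf0 k u0).
by rewrite -cE ck => h; move: (cf0_pos k); rewrite -h ltxx.
Qed.

Lemma C3 : exists k, c k = 0.
Proof.
have [l hl] : exists l, (kappa < #|[pred k | lev k == l]|)%nat.
  case: (boolP [exists l : 'I_n.+1, kappa < #|[pred k | lev k == l]|])%nat.
    by move/existsP => [l hl]; exists (nat_of_ord l).
  rewrite negb_exists => /forallP hall.
  have : (mu.+1 <= n.+1 * kappa)%nat.
    rewrite -{1}(card_ord mu.+1) -sum1_card.
    rewrite (partition_big (fun k => (inord (lev k) : 'I_n.+1)) xpredT) //=.
    apply: (@leq_trans (\sum_(l < n.+1) kappa)); last by rewrite sum_nat_const card_ord mulnC.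
    apply: leq_sum => l _.
    rewrite sum1_card.
    have := hall l; rewrite -leqNgt => h; apply: leq_trans h.
    apply: subset_leq_card; apply/subsetP => k; rewrite !inE => /eqP <-.
    by rewrite /= inordK ?eqxx // ltnS; apply: ones_le.
  by move=> h; move: (leq_trans h hmu); rewrite ltnn.
have hc : leq kappa.+1 (count (fun j => (0 < cf0 j) && (lev j == l)) (tb Q)).
  have [pe _] := htb Q.
  move/permP: pe => ->.
  rewrite cnt_enum; apply: leq_trans hl _; apply: subset_leq_card; apply/subsetP => k.
  rewrite !inE => h; rewrite unfold_in /= h andbT; exact: cf0_pos.
have [k [_ hk]] := @outer_clear _ _ pheno_dist 1 kappa Q lev hdQ (tb Q) cf0 l k1 hc.
by exists k; rewrite cE.
Qed.

Lemma mu_pos : (0 < mu)%nat.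
Proof. by apply: leq_trans hmu; rewrite muln_gt0 k1. Qed.

Lemma worst_ex : exists z, z \in worst kappa u tb P y.
Proof.
have j0 : 'I_mu := Ordinal mu_pos.
case: (@Order.TotalTheory.arg_minP _ _ _ j0 xpredT (fun j => c (lft j)) isT) => z _ hz.
by exists z; rewrite inE; apply/forallP => k; exact: hz.
Qed.

Lemma next_inv z : z \in worst kappa u tb P y ->
  forall j, exists j', ones (Defs.next kappa u tb P y z j') = ones (P j).
Proof.
rewrite inE => /forallP hz j.
rewrite /Defs.next; case: ifP => hrep; last by exists j.
case: (eqVneq j z) => [->|ne]; last by exists j; rewrite ffunE (negbTE ne).
have cz : c (lft z) = 0.
  have [k ck] := C3.
  apply/eqP; rewrite eq_le C1pos andbT -ck.
  case: (ord_split k) => [->|[j0 ->]]; [exact: hrep | exact: hz j0].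
have [i [ni hi]] := C2 cz.
move: hi; rewrite /Q extend_lft.
case: (ord_split i) => [->|[j1 ij]].
  by rewrite extend_max => hi; exists z; rewrite ffunE eqxx.
rewrite ij extend_lft => hi; exists j1; rewrite ffunE.
have -> : (j1 == z) = false.
  by apply/negbTE; apply: contraNneq ni => e; rewrite ij e.
by [].
Qed.

Lemma next_prog z : z \in worst kappa u tb P y ->
  (forall j, ones (P j) != ones y) -> Defs.next kappa u tb P y z z = y.
Proof.
rewrite inE => /forallP hz hy.
have cm : c ord_max != 0.
  apply/eqP => cm; have [i [ni hi]] := C2 cm.
  move: hi; rewrite /Q extend_max.
  case: (ord_split i) => [im|[j1 ->]]; first by move: ni; rewrite im eqxx.
  by rewrite extend_lft => hi; move: (hy j1); rewrite hi eqxx.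
have cmp : 0 < c ord_max by rewrite lt_neqAle eq_sym cm C1pos.
have [k ck] := C3.
case: (ord_split k) => [km|[j0 kj]]; first by move: cm; rewrite -km ck eqxx.
have hrep : c (lft z) <= c ord_max.
  apply: le_trans (hz j0) _; rewrite -kj ck; exact: ltW.
by rewrite /Defs.next; move: hrep; rewrite /c => ->; rewrite ffunE eqxx.
Qed.

End EAfacts.


Section Mut.
Variable n : nat.

Lemma onesE (x : bits n) : ones x = #|[pred i | tnth x i]|.
Proof.
rewrite /ones -cnt_enum -{1}(map_tnth_enum x) count_map; apply: eq_count => i //.
Qed.

Lemma hammingE (x y : bits n) : hamming x y = #|[pred i | tnth x i != tnth y i]|.
Proof.
rewrite /hamming -cnt_enum -{1}(map_tnth_enum x) -{1}(map_tnth_enum y) zip_map.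
by rewrite -map_comp count_map; apply: eq_count => i.
Qed.

Let p : R := n%:R^-1.

Lemma prod_if (a : pred 'I_n) (r s : R) :
  \prod_(i < n) (if a i then r else s) = r ^+ #|a| * s ^+ (n - #|a|).
Proof.
rewrite (bigID a) /=.
rewrite [X in X * _](eq_bigr (fun _ => r)); last by move=> i ->.
rewrite [X in _ * X](eq_bigr (fun _ => s)); last by move=> i hi; rewrite (negbTE hi).
rewrite !prodr_const; congr (_ * _ ^+ _).
have h := cardC a; rewrite card_ord in h.
apply: (@addnI #|a|); rewrite subnKC; last by rewrite -(leq_add2r #|[predC a]|) h leq_addr.
rewrite -[RHS]h; congr (_ + _)%N; apply: eq_card => i; by rewrite !inE.
Qed.

Lemma mutprobE (x y : bits n) :
  mutprob x y = \prod_(i < n) (if tnth x i != tnth y i then p else 1 - p).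
Proof. by rewrite prod_if /mutprob hammingE. Qed.

Lemma p_ge0 : 0 <= p.
Proof. by rewrite /p invr_ge0. Qed.

Lemma p_le1 : p <= 1.
Proof.
rewrite /p; case: n => [|m]; first by rewrite invr0.
by rewrite invf_le1 ?ler1n // ltr0n.
Qed.

Lemma mutprob_ge0 (x y : bits n) : 0 <= mutprob x y.
Proof.
rewrite mutprobE; apply: prodr_ge0 => i _; case: ifP => _; first exact: p_ge0.
by rewrite subr_ge0 p_le1.
Qed.

Lemma sum_tuples (F : bits n -> R) :
  \sum_(y : bits n) F y = \sum_(f : {ffun 'I_n -> bool}) F [tuple f i | i < n].
Proof.
apply: (reindex (fun f : {ffun 'I_n -> bool} => [tuple f i | i < n])).
exists (fun t : bits n => [ffun i => tnth t i]) => f _.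
  by apply/ffunP => i; rewrite ffunE tnth_mktuple.
by apply: eq_from_tnth => i; rewrite tnth_mktuple ffunE.
Qed.

Lemma mutprob_sum (x : bits n) : \sum_(y : bits n) mutprob x y = 1.
Proof.
rewrite sum_tuples.
under eq_bigr => f _ do rewrite mutprobE.
under eq_bigr => f _ do under eq_bigr => i _ do rewrite tnth_mktuple.
rewrite -(bigA_distr_bigA (fun i b => if tnth x i != b then p else 1 - p)) /=.
apply: big1 => i _.
rewrite (bigD1 true) //= (big_pred1 false); last by case.
by case: (tnth x i) => /=; ring.
Qed.

Definition flip (x : bits n) (i : 'I_n) : bits n :=
  [tuple (if j == i then ~~ tnth x j else tnth x j) | j < n].

Lemma flip_inj (x : bits n) : injective (flip x).
Proof.
move=> i j e.
have := congr1 (fun t => tnth t i) e; rewrite /flip !tnth_mktuple eqxx.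
by case: eqP => // _; case: (tnth x i).
Qed.

Lemma hamming_flip (x : bits n) i : hamming x (flip x i) = 1%nat.
Proof.
rewrite hammingE -(card1 i); apply: eq_card => j; rewrite !inE /flip tnth_mktuple.
by case: (eqVneq j i) => [->|ne]; rewrite ?eqxx ?(negbTE ne) ?eqxx; case: (tnth x _).
Qed.

Lemma mutprob_flip (x : bits n) i : mutprob x (flip x i) = p * (1 - p) ^+ n.-1.
Proof. by rewrite /mutprob hamming_flip expr1 subn1. Qed.

Lemma ones_flip (x : bits n) i :
  ones (flip x i) = if tnth x i then (ones x).-1 else (ones x).+1.
Proof.
rewrite !onesE (cardD1 i) [in RHS](cardD1 i) !inE /flip tnth_mktuple eqxx.
have -> : #|[predD1 [pred j | tnth [tuple (if j == i then ~~ tnth x j else tnth x j) | j < n] j] & i]|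
        = #|[predD1 [pred j | tnth x j] & i]|.
  by apply: eq_card => j; rewrite !inE tnth_mktuple; case: eqP.
by case: (tnth x i).
Qed.

End Mut.

Lemma card_zeros n (x : bits n) : #|[pred i | ~~ tnth x i]| = (n - ones x)%nat.
Proof.
rewrite onesE.
have h := cardC [pred i | tnth x i]; rewrite card_ord in h.
apply: (@addnI #|[pred i | tnth x i]|); rewrite subnKC; last by rewrite -(leq_add2r #|[predC [pred i | tnth x i]]|) h leq_addr.
rewrite -[RHS]h; congr (_ + _)%N; apply: eq_card => i; by rewrite !inE.
Qed.


Lemma sum_eq_mul (T : finType) (X : T) (phi : T -> R) :
  \sum_(P' : T) (P' == X)%:R * phi P' = phi X.
Proof.
rewrite (bigD1 X) //= eqxx mul1r big1 ?addr0 // => P' /negbTE ->; by rewrite mul0r.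
Qed.

Lemma sum_swap (I T : finType) (F : I -> T -> R) (phi : T -> R) :
  \sum_(P' : T) (\sum_(i : I) F i P') * phi P' = \sum_(i : I) \sum_(P' : T) F i P' * phi P'.
Proof.
under eq_bigr => P' _ do rewrite mulr_suml.
exact: exchange_big.
Qed.

Lemma sum_swap_in (I T : finType) (A : pred I) (F : I -> T -> R) (phi : T -> R) :
  \sum_(P' : T) (\sum_(i in A) F i P') * phi P' = \sum_(i in A) \sum_(P' : T) F i P' * phi P'.
Proof.
under eq_bigr => P' _ do rewrite mulr_suml.
exact: exchange_big.
Qed.

Lemma sum_cmul (T : finType) (c : R) (F : T -> R) (phi : T -> R) :
  \sum_(P' : T) (c * F P') * phi P' = c * \sum_(P' : T) F P' * phi P'.
Proof. rewrite mulr_sumr; apply: eq_bigr => P' _; by rewrite mulrA. Qed.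

Section Kern.
Variables (n mu kappa : nat) (u : nat -> R) (tb : xpop n mu -> seq 'I_mu.+1).

Lemma kernel_sum (P : pop n mu) (phi : pop n mu -> R) :
  \sum_(P' : pop n mu) kernel kappa u tb P P' * phi P' =
  \sum_(i : 'I_mu) mu%:R^-1 * \sum_(y : bits n) mutprob (P i) y *
    \sum_(z in worst kappa u tb P y) (#|worst kappa u tb P y|%:R)^-1 *
      phi (Defs.next kappa u tb P y z).
Proof.
rewrite /kernel sum_swap; apply: eq_bigr => i _.
rewrite sum_cmul; congr (_ * _).
rewrite sum_swap; apply: eq_bigr => y _.
rewrite sum_cmul; congr (_ * _).
rewrite sum_swap_in; apply: eq_bigr => z _.
rewrite sum_cmul; congr (_ * _).
exact: sum_eq_mul.
Qed.

Lemma kernel_ge0 (P P' : pop n mu) : 0 <= kernel kappa u tb P P'.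
Proof.
apply: sumr_ge0 => i _; apply: mulr_ge0; first by rewrite invr_ge0.
apply: sumr_ge0 => y _; apply: mulr_ge0; first exact: mutprob_ge0.
apply: sumr_ge0 => z _; apply: mulr_ge0; first by rewrite invr_ge0.
by case: eqP.
Qed.

Lemma worst_sum (P : pop n mu) y :
  (0 < #|worst kappa u tb P y|)%nat ->
  \sum_(z in worst kappa u tb P y) (#|worst kappa u tb P y|%:R)^-1 = 1 :> R.
Proof.
move=> w0; rewrite sumr_const; move: w0; set w := #|_| => w0.
rewrite -(mulr_natr ((w%:R)^-1)) mulVf //.
by rewrite pnatr_eq0 -lt0n.
Qed.

End Kern.


Section Main.
Variables (n mu kappa : nat) (u : nat -> R) (tb : xpop n mu -> seq 'I_mu.+1).
Hypotheses (upos : forall k, (k <= n)%nat -> 0 < u k) (k1 : (0 < kappa)%nat)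
  (hmu : (n.+1 * kappa <= mu)%nat) (htb : valid_sort u tb) (n3 : (3 <= n)%nat).

Lemma mu_gt0 : (0 < mu)%nat.
Proof. by apply: leq_trans hmu; rewrite muln_gt0 k1. Qed.

Let j0 : 'I_mu := Ordinal mu_gt0.
Let lstar : 'I_n.+1 := Order.arg_max ord0 xpredT (fun l : 'I_n.+1 => u l).

Lemma lstar_max (l : 'I_n.+1) : u l <= u lstar.
Proof.
rewrite /lstar; case: (@Order.TotalTheory.arg_maxP _ _ _ ord0 xpredT (fun l : 'I_n.+1 => u l) isT).
by move=> i _ h; exact: h.
Qed.

Definition distl (x : bits n) : nat := ((ones x - lstar) + (lstar - ones x))%nat.
Definition hh (P : pop n mu) : nat := distl (P (fintype.arg_min j0 xpredT (fun j => distl (P j)))).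

Lemma hh_le P j : (hh P <= distl (P j))%nat.
Proof. by rewrite /hh; case: arg_minnP => // i _ h; exact: h. Qed.

Lemma hh_ex P : exists j, hh P = distl (P j).
Proof. by eexists. Qed.

Lemma lstar_le : (lstar <= n)%nat.
Proof. by rewrite -ltnS ltn_ord. Qed.

Lemma distl_le x : (distl x <= n)%nat.
Proof. have := ones_le x; have := lstar_le; rewrite /distl; lia. Qed.

Lemma hh_bound P : (hh P <= n)%nat.
Proof. exact: distl_le. Qed.

Lemma hh0 P : hh P = 0%nat -> has_opt u P.
Proof.
have [j ->] := hh_ex P => h0.
have e : ones (P j) = lstar by move: h0; rewrite /distl; lia.
apply/existsP; exists j; apply/forallP => y.
rewrite /unit_fun e.
have := lstar_max (inord (ones y)); rewrite inordK //; by rewrite ltnS ones_le.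
Qed.

Let p : R := n%:R^-1.
Definition beta : R := p * (1 - p) ^+ n.-1 * mu%:R^-1.

Lemma p_pos : 0 < p.
Proof. by rewrite /p invr_gt0 ltr0n; apply: leq_trans n3. Qed.

Lemma p_lt1 : p < 1.
Proof. by rewrite /p invf_lt1 ?ltr1n ?ltr0n //; apply: leq_trans n3. Qed.

Lemma beta_pos : 0 < beta.
Proof.
rewrite /beta; apply: mulr_gt0; last by rewrite invr_gt0 ltr0n mu_gt0.
apply: mulr_gt0; first exact: p_pos.
by apply: exprn_gt0; rewrite subr_gt0 p_lt1.
Qed.

Definition G (k : nat) : R := \sum_(i < k) (i.+1%:R * beta)^-1.

Lemma G_ge0 k : 0 <= G k.
Proof.
apply: sumr_ge0 => i _; rewrite invr_ge0; apply: mulr_ge0; last exact: ltW beta_pos.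
by rewrite ler0n.
Qed.

Lemma G_S k : G k.+1 = G k + (k.+1%:R * beta)^-1.
Proof. by rewrite /G big_ord_recr. Qed.

Lemma G_mono k1' k2 : (k1' <= k2)%nat -> G k1' <= G k2.
Proof.
elim: k2 => [|k2 IH]; first by rewrite leqn0 => /eqP ->.
rewrite leq_eqVlt => /orP [/eqP -> //|]; rewrite ltnS => h.
apply: le_trans (IH h) _; rewrite G_S lerDl invr_ge0; apply: mulr_ge0; last exact: ltW beta_pos.
by rewrite ler0n.
Qed.

Lemma G_pred k : (0 < k)%nat -> G k.-1 = G k - (k%:R * beta)^-1.
Proof. by case: k => // k _; rewrite G_S /= addrK. Qed.

Lemma distl_ones x y : ones x = ones y -> distl x = distl y.
Proof. by rewrite /distl => ->. Qed.

Lemma drift P : ~~ has_opt u P ->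
  \sum_(P' : pop n mu) kernel kappa u tb P P' * G (hh P') <= G (hh P) - 1.
Proof.
move=> nopt.
set k := hh P.
have kpos : (0 < k)%nat by rewrite lt0n; apply/eqP => h; move: nopt; rewrite hh0.
have [i0 hi0] := hh_ex P; rewrite -/k in hi0.
set x := P i0.
set S := [set s : 'I_n | tnth x s == (lstar < ones x)%nat].
have cardS : (k <= #|S|)%nat.
  have hl := ones_le x; have hs := lstar_le.
  case: (ltnP lstar (ones x)) => hc.
    have -> : #|S| = ones x by rewrite onesE; apply: eq_card => s; rewrite !inE hc.
    by rewrite hi0 /distl -/x; lia.
  have -> : #|S| = (n - ones x)%nat.
    by rewrite -card_zeros; apply: eq_card => s; rewrite !inE ltnNge hc /=; case: (tnth x s).
  by rewrite hi0 /distl -/x; lia.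
have flipS : forall s, s \in S -> distl (flip x s) = k.-1.
  move=> s; rewrite inE => /eqP hs.
  have hl := ones_le x; have hsl := lstar_le.
  rewrite /distl ones_flip hs hi0 /distl -/x.
  have kp := kpos; rewrite hi0 /distl -/x in kp.
  case: (ltnP lstar (ones x)) => hc; rewrite -?subn1; lia.
set Y := [set flip x s | s in S].
have good_next : forall y z, y \in Y -> z \in worst kappa u tb P y ->
    (hh (Defs.next kappa u tb P y z) <= k.-1)%nat.
  move=> y z /imsetP [s sS ->] hz.
  have hy : forall j, ones (P j) != ones (flip x s).
    move=> j; apply/negP => /eqP e.
    have := hh_le P j; rewrite -/k (distl_ones e) flipS //.
    by case: (k) kpos => // k' _; rewrite ltnn.
  have nz := next_prog upos k1 hmu htb hz hy.
  by apply: leq_trans (hh_le _ z) _; rewrite nz flipS.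
have any_next : forall y z, z \in worst kappa u tb P y ->
    (hh (Defs.next kappa u tb P y z) <= k)%nat.
  move=> y z hz.
  have [j' hj'] := next_inv upos k1 hmu htb hz i0.
  by apply: leq_trans (hh_le _ j') _; rewrite (distl_ones hj') -/x -hi0.
set c := (k%:R * beta)^-1.
have bound : forall i y z, z \in worst kappa u tb P y ->
    G (hh (Defs.next kappa u tb P y z)) <= G k - ((i == i0) && (y \in Y))%:R * c.
  move=> i y z hz.
  case: (boolP ((i == i0) && (y \in Y))) => /= g.
    move/andP: g => [_ yY]; rewrite mul1r /c -G_pred //; apply: G_mono; exact: good_next.
  by rewrite mul0r subr0; apply: G_mono; exact: any_next.
set A := fun i : 'I_mu => \sum_(y : bits n) mutprob (P i) y * ((i == i0) && (y \in Y))%:R.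
have Vle : forall i, \sum_(y : bits n) mutprob (P i) y *
    \sum_(z in worst kappa u tb P y) (#|worst kappa u tb P y|%:R)^-1 *
      G (hh (Defs.next kappa u tb P y z)) <= G k - c * A i.
  move=> i.
  apply: (@le_trans _ _ (\sum_(y : bits n) mutprob (P i) y * (G k - ((i == i0) && (y \in Y))%:R * c))).
    apply: ler_sum => y _; apply: ler_wpM2l; first exact: mutprob_ge0.
    have [z0 hz0] := worst_ex u tb k1 hmu P y.
    have w0 : (0 < #|worst kappa u tb P y|)%nat by apply/card_gt0P; exists z0.
    set B := G k - _.
    rewrite [X in _ <= X](_ : _ = \sum_(z in worst kappa u tb P y) (#|worst kappa u tb P y|%:R)^-1 * B); last first.
      by rewrite -mulr_suml worst_sum // mul1r.
    apply: ler_sum => z hz; apply: ler_wpM2l; first by rewrite invr_ge0 ler0n.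
    exact: bound.
  rewrite le_eqVlt; apply/orP; left; apply/eqP.
  under eq_bigr => y _ do rewrite mulrBr.
  rewrite sumrB -mulr_suml mutprob_sum mul1r /A mulr_sumr; congr (_ - _).
  by apply: eq_bigr => y _; rewrite mulrA mulrC mulrA.
have Ai0 : A i0 = #|S|%:R * (p * (1 - p) ^+ n.-1).
  rewrite /A eqxx /=.
  rewrite [LHS](_ : _ = \sum_(y in Y) mutprob x y); last first.
    by rewrite [RHS]big_mkcond; apply: eq_bigr => y _; case: (y \in Y); rewrite ?mulr1 ?mulr0.
  rewrite (big_imset _ (in2W (@flip_inj _ x))) /=.
  rewrite (eq_bigr (fun _ => p * (1 - p) ^+ n.-1)); last by move=> s _; rewrite mutprob_flip.
  by rewrite sumr_const mulr_natl.
have Ai : forall i, i != i0 -> A i = 0.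
  move=> i /negbTE ne; rewrite /A ne; apply: big1 => y _; by rewrite mulr0.
rewrite kernel_sum.
apply: (@le_trans _ _ (\sum_(i : 'I_mu) mu%:R^-1 * (G k - c * A i))).
  by apply: ler_sum => i _; apply: ler_wpM2l; [rewrite invr_ge0 ler0n | exact: Vle].
rewrite (bigD1 i0) //= (eq_bigr (fun _ => mu%:R^-1 * G k)); last first.
  by move=> i ne; rewrite Ai // mulr0 subr0.
rewrite sumr_const Ai0.
have hcard : #|[pred i : 'I_mu | i != i0]| = mu.-1.
  have h := cardC1 i0; rewrite card_ord in h; rewrite -h; apply: eq_card => i; by rewrite !inE.
rewrite hcard -[_ *+ mu.-1]mulr_natr.
have mp : 0 < mu%:R :> R by rewrite ltr0n mu_gt0.
have kp : 0 < k%:R :> R by rewrite ltr0n.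
have ap : 0 < p * (1 - p) ^+ n.-1.
  by apply: mulr_gt0; [exact: p_pos | apply: exprn_gt0; rewrite subr_gt0 p_lt1].
have m1 : mu.-1%:R = mu%:R - 1 :> R by rewrite -subn1 natrB ?mu_gt0.
rewrite m1.
have -> : mu%:R^-1 * (G k - c * (#|S|%:R * (p * (1 - p) ^+ n.-1))) +
  mu%:R^-1 * G k * (mu%:R - 1) = G k - #|S|%:R / k%:R.
  rewrite /c /beta -/p; field.
  by rewrite !gt_eqF // ?p_pos // exprn_gt0 // subr_gt0 p_lt1.
have : 1 <= #|S|%:R / k%:R :> R.
  by rewrite ler_pdivlMr // mul1r ler_nat.
move: (G k) (_ / _) => a b; lra.
Qed.

Lemma q_ge0 t P : 0 <= q kappa u tb t P.
Proof.
elim: t P => [|t IH] P; rewrite ffunE.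
  case: ifP => _ //; rewrite /init; apply: prodr_ge0 => j _; by rewrite invr_ge0 ler0n.
case: ifP => _ //; apply: sumr_ge0 => P0 _; apply: mulr_ge0 => //; exact: kernel_ge0.
Qed.

Lemma q_opt t P : has_opt u P -> q kappa u tb t P = 0.
Proof. by case: t => [|t]; rewrite ffunE => ->. Qed.

Definition Phi t := \sum_(P : pop n mu) q kappa u tb t P * G (hh P).

Lemma Phi_step t : Phi t.+1 <= Phi t - tail_prob kappa u tb t.
Proof.
apply: (@le_trans _ _ (\sum_(P' : pop n mu) (\sum_(P : pop n mu) q kappa u tb t P * kernel kappa u tb P P') * G (hh P'))).
  apply: ler_sum => P' _; rewrite ffunE; case: ifP => _ //.
  rewrite mul0r; apply: mulr_ge0; last exact: G_ge0.
  by apply: sumr_ge0 => P _; apply: mulr_ge0; [exact: q_ge0 | exact: kernel_ge0].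
rewrite sum_swap.
under eq_bigr => P _ do under eq_bigr => P' _ do rewrite -mulrA.
under eq_bigr => P _ do rewrite -mulr_sumr.
rewrite /Phi /tail_prob -sumrB.
apply: ler_sum => P _.
case: (boolP (has_opt u P)) => hP.
  by rewrite q_opt // !mul0r subr0.
rewrite -[X in _ <= _ - X]mulr1 -mulrBr; apply: ler_wpM2l; first exact: q_ge0.
exact: drift.
Qed.

Lemma pow_expn (m k : nat) : PeanoNat.Nat.pow m k = expn m k.
Proof. elim: k => // k IH; by rewrite expnS -IH. Qed.

Lemma init_sum : \sum_(P : pop n mu) init P = 1.
Proof.
rewrite /init.
under eq_bigr => P _ do rewrite prodr_const card_ord.
rewrite sumr_const card_ffun card_tuple card_bool card_ord.
rewrite pow_expn -(mulr_natr ((expn 2 n)%:R^-1 ^+ mu)) (natrX _ (expn 2 n) mu) -exprMn mulVf ?expr1n //.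
by rewrite pnatr_eq0 expn_eq0.
Qed.

Lemma Phi0 : Phi 0 <= G n.
Proof.
apply: (@le_trans _ _ (\sum_(P : pop n mu) init P * G n)); last by rewrite -mulr_suml init_sum mul1r.
apply: ler_sum => P _; rewrite ffunE; case: ifP => _.
  by rewrite mul0r; apply: mulr_ge0; [apply: prodr_ge0 => j _; rewrite invr_ge0 ler0n | exact: G_ge0].
apply: ler_wpM2l; first by apply: prodr_ge0 => j _; rewrite invr_ge0 ler0n.
apply: G_mono; exact: hh_bound.
Qed.

Lemma Phi_ge0 t : 0 <= Phi t.
Proof. apply: sumr_ge0 => P _; apply: mulr_ge0; [exact: q_ge0 | exact: G_ge0]. Qed.

Lemma pe_bound N : partial_expect kappa u tb N <= G n.
Proof.
have h : forall N, partial_expect kappa u tb N + Phi N <= Phi 0.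
  elim=> [|N' IH]; first by rewrite /partial_expect big_ord0 add0r.
  rewrite /partial_expect big_ord_recr /= -/(partial_expect kappa u tb N').
  have := Phi_step N'; move: IH.
  move: (partial_expect _ _ _ _) (Phi N') (Phi N'.+1) (tail_prob _ _ _ _) (Phi 0) => a b c d e; lra.
have := h N; have := Phi_ge0 N; have := Phi0.
move: (partial_expect _ _ _ _) (Phi N) (Phi 0) (G n) => a b c d; lra.
Qed.

Lemma Gn_bound : G n <= 6%:R * mu%:R * n%:R * L n%:R.
Proof.
have n0 : (0 < n)%nat by apply: leq_trans n3.
have -> : G n = beta^-1 * \sum_(i < n) (i.+1%:R)^-1.
  rewrite /G mulr_sumr; apply: eq_bigr => i _; by rewrite invfM mulrC.
have hH := @harm_ln n n0.
have l3 : 1 <= L n%:R.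
  by apply: le_trans ln3 _; apply: L_mono; rewrite ?ltr0n // ler_nat.
have hH2 : \sum_(i < n) (i.+1%:R : R)^-1 <= 2%:R * L n%:R.
  by apply: le_trans hH _; rewrite -natr1 mulrDl mul1r; lra.
have pl := @pow_lb n (leq_trans (isT : (1 < 3)%nat) n3).
have qpos : 0 < (1 - (n%:R : R)^-1) ^+ n.-1 by apply: lt_le_trans pl; rewrite invr_gt0 ltr0n.
have mp : 0 < mu%:R :> R by rewrite ltr0n mu_gt0.
have np : 0 < n%:R :> R by rewrite ltr0n.
have bi : beta^-1 <= 3%:R * mu%:R * n%:R.
  rewrite /beta /p !invfM !invrK.
  rewrite -[X in _ <= X]mulrA [X in _ <= X]mulrC -!mulrA.
  rewrite mulrC -!mulrA; apply: ler_wpM2l; first exact: ltW.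
  rewrite ler_pM2r // -[X in _ <= X]invrK lef_pV2 ?posrE ?invr_gt0 ?ltr0n //.
have b0 : 0 <= beta^-1 by rewrite invr_ge0 ltW // beta_pos.
apply: le_trans (ler_wpM2l b0 hH2) _.
have L0 : 0 <= L n%:R by apply: le_trans l3; exact: ler01.
apply: le_trans (ler_wpM2r (mulr_ge0 (ler0n _ 2) L0) bi) _.
rewrite le_eqVlt; apply/orP; left; apply/eqP.
rewrite (_ : 6%:R = 3%:R * 2%:R :> R); last by rewrite -natrM.
ring.
Qed.

End Main.

Theorem theorem1 :
  exists C : R, 0 < C /\ exists n0 : nat,
  forall (n : nat), (n0 <= n)%nat ->
  forall (u : nat -> R), (forall k, (k <= n)%nat -> 0 < u k) ->
  forall (kappa mu : nat), (1 <= kappa)%nat -> (n.+1 * kappa <= mu)%nat ->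
  forall tb : xpop n mu -> seq 'I_mu.+1, valid_sort u tb ->
  forall N : nat,
    partial_expect kappa u tb N <= C * mu%:R * n%:R * Rpower.ln n%:R.
Proof.
exists 6%:R; split; first by rewrite ltr0n.
exists 3%nat => n n3 u upos kappa mu k1 hmu tb htb N.
apply: le_trans (pe_bound upos k1 hmu htb n3 N) _.
exact: (Gn_bound k1 hmu n3).
Qed.
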